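(* Let $F$ be a field. Every almost identity PC-map $\varphi:\mathrm{UT}(3,F)\to\mathrm{UT}(3,F)$ is central, i.e. $\varphi(a)\in aC$ for every $a\in\mathrm{UT}(3,F)$, where $C=\{t_{13}(\alpha):\alpha\in F\}$; equivalently $\varphi(a)_{12}=a_{12}$ and $\varphi(a)_{23}=a_{23}$ for all $a$.
   Context: $\mathrm{UT}(3,F)$ is the group of upper unitriangular $3\times3$ matrices over $F$. $e$ is the identity, $e_{ij}$ the matrix unit, $t_{ij}(\alpha)=e+\alpha e_{ij}$ ($i<j$). $[x,y]=xyx^{-1}y^{-1}$. A PC-map is a bijection $\varphi$ of the group with $\varphi([x,y])=[\varphi(x),\varphi(y)]$ for all $x,y$; it is almost identity if $\varphi(t_{ij}(\alpha))=t_{ij}(\alpha)$ for all $i<j$, $\alpha\in F$. *)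

(* Defs.v *)
From HB Require Import structures.
From mathcomp Require Import all_boot all_order all_algebra.
Set Implicit Arguments. Unset Strict Implicit. Unset Printing Implicit Defensive.
Import GRing.Theory.
Local Open Scope ring_scope.

Definition is_UT3 (F : fieldType) (a : 'M[F]_3) : Prop :=
  forall i j : 'I_3, ((j < i)%N -> a i j = 0) /\ (i = j -> a i j = 1).

Definition tmx (F : fieldType) (i j : 'I_3) (alpha : F) : 'M[F]_3 :=
  1%:M + alpha *: delta_mx i j.

Definition comm3 (F : fieldType) (x y : 'M[F]_3) : 'M[F]_3 :=
  x *m y *m invmx x *m invmx y.

(* phi is a PC-map of UT(3,F): a bijection of UT(3,F) preserving commutators.
   phi is given as a function on 'M[F]_3; only its restriction to UT(3,F) matters. *)
Definition PC_map (F : fieldType) (phi : 'M[F]_3 -> 'M[F]_3) : Prop :=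
  (forall a, is_UT3 a -> is_UT3 (phi a)) /\
  (forall a b, is_UT3 a -> is_UT3 b -> phi a = phi b -> a = b) /\
  (forall b, is_UT3 b -> exists2 a, is_UT3 a & phi a = b) /\
  (forall x y, is_UT3 x -> is_UT3 y -> phi (comm3 x y) = comm3 (phi x) (phi y)).

Definition almost_identity (F : fieldType) (phi : 'M[F]_3 -> 'M[F]_3) : Prop :=
  forall (i j : 'I_3) (alpha : F), (i < j)%N -> phi (tmx i j alpha) = tmx i j alpha.

(* Main.v *)
Require Import Defs.
From mathcomp Require Import all_boot all_order all_algebra ring.
Local Open Scope ring_scope.
Import GRing.Theory.
Set Implicit Arguments. Unset Strict Implicit.

Definition mkf (F : fieldType) (x y z : F) (i j : nat) : F :=
  match i, j with
  | 0, 0 | 1, 1 | 2, 2 => 1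
  | 0, 1 => x | 1, 2 => y | 0, 2 => z
  | _, _ => 0 end.
Definition mk (F : fieldType) (x y z : F) : 'M[F]_3 :=
  \matrix_(i < 3, j < 3) mkf x y z i j.

Ltac mxeq := apply/matrixP => [[[|[|[|?]]] ?] [[|[|[|?]]] ?]]; rewrite !mxE ?big_ord_recr ?big_ord0 /= ?mxE //=; ring.

Lemma mk_mul (F : fieldType) (x y z x' y' z' : F) :
  mk x y z *m mk x' y' z' = mk (x + x') (y + y') (z + z' + x * y').
Proof. mxeq. Qed.

Lemma mk_inv (F : fieldType) (x y z : F) :
  invmx (mk x y z) = mk (-x) (-y) (x * y - z).
Proof.
have H : mk x y z *m mk (-x) (-y) (x * y - z) = 1%:M.
  rewrite mk_mul. mxeq.
have [U _] := mulmx1_unit H.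
by rewrite -[RHS](mulKmx U) H mulmx1.
Qed.

Lemma comm_mk (F : fieldType) (x y z x' y' z' : F) :
  comm3 (mk x y z) (mk x' y' z') = mk 0 0 (x * y' - x' * y).
Proof. rewrite /comm3 !mk_inv !mk_mul. congr mk; ring. Qed.

Lemma UT_mk (F : fieldType) (a : 'M[F]_3) : is_UT3 a -> a = mk (a ord0 (inord 1)) (a (inord 1) (inord 2)) (a ord0 (inord 2)).
Proof.
move=> H; apply/matrixP => i j; rewrite !mxE.
have [H1 H2] := H i j.
case: i H1 H2 => [[|[|[|i]]] Hi]; case: j => [[|[|[|j]]] Hj] //= H1 H2;
  first [ by rewrite H1 | by rewrite H2 //; apply: val_inj
        | by congr (a _ _); apply: val_inj => /=; rewrite ?inordK ].
Qed.

Lemma mk_UT (F : fieldType) (x y z : F) : is_UT3 (mk x y z).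
Proof.
move=> i j; rewrite !mxE; split.
  by case: i => [[|[|[|i]]] Hi]; case: j => [[|[|[|j]]] Hj].
by move=> ->; case: j => [[|[|[|j]]] Hj].
Qed.

Lemma tmx_mk (F : fieldType) (a : F) :
  [/\ tmx (inord 0) (inord 1) a = mk a 0 0, tmx (inord 1) (inord 2) a = mk 0 a 0
  & tmx (inord 0) (inord 2) a = mk 0 0 a].
Proof.
split; apply/matrixP => i j; rewrite !mxE /= ?inordK //;
case: i => [[|[|[|i]]] Hi]; case: j => [[|[|[|j]]] Hj] //=;
rewrite -!val_eqE /= !inordK //=; ring.
Qed.

Theorem mainTheorem8 (F : fieldType) (phi : 'M[F]_3 -> 'M[F]_3) :
  PC_map phi -> almost_identity phi ->
  forall a : 'M[F]_3, is_UT3 a ->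
    exists alpha : F, phi a = a *m tmx (inord 0) (inord 2) alpha.
Proof.
move=> [Hut [_ [_ Hc]]] Hai a Ha.
have Hp := Hut a Ha.
have [T12 T23 T13] := tmx_mk (1 : F).
have h13 : forall c : F, phi (mk 0 0 c) = mk 0 0 c.
  move=> c; have [_ _ <-] := tmx_mk c; apply: Hai; by rewrite /= !inordK.
have E1 := Hc a (mk 0 1 0) Ha (mk_UT _ _ _).
have E2 := Hc a (mk 1 0 0) Ha (mk_UT _ _ _).
rewrite -T23 Hai ?inordK // T23 in E1.
rewrite -T12 Hai ?inordK // T12 in E2.
move: (phi a) Hp E1 E2 => p Hp E1 E2.
have Ea := UT_mk Ha; have Ep := UT_mk Hp.
move: Ea Ep.
set x := a _ _; set y := a _ _; set z := a _ _.
set u := p _ _; set v := p _ _; set w := p _ _.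
move=> Ea Ep; rewrite Ep in E1 E2 *; rewrite Ea in E1 E2 *.
rewrite !comm_mk !mulr0 !mul0r !mulr1 !mul1r !subr0 !sub0r !h13 in E1 E2.
have ex : x = u.
  by have := congr1 (fun m : 'M[F]_3 => m ord0 (inord 2)) E1; rewrite /= !mxE /= inordK.
have ey : y = v.
  have := congr1 (fun m : 'M[F]_3 => m ord0 (inord 2)) E2; rewrite /= !mxE /= inordK //.
  by move/eqP; rewrite eqr_opp => /eqP.
exists (w - z); have [_ _ ->] := tmx_mk (w - z).
rewrite mk_mul ex ey; congr mk; ring.
Qed.
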